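(* For every complex number $s$ with $\operatorname{Re}(s)>2$, $$\sum_{n\ge1}\frac{\tau(n)\delta(n)}{n^s}=2\,\zeta(s-1)^2\,F(s-1).$$
   Context: The arithmetic derivative $\delta$ is defined by $\delta(p)=1$ for every prime $p$ and $\delta(mn)=m\delta(n)+n\delta(m)$ for all positive integers $m,n$; equivalently $\delta(1)=0$ and $\delta(n)=n\sum_{p^\alpha\| n}\alpha/p$. $\tau(n)$ is the number of positive divisors of $n$, $\zeta$ is the Riemann zeta function and $F(s)=\sum_{p\text{ prime}}\frac{1}{p^{s+1}-p}$. *)

(* Defs.v *)
From Stdlib Require Import Reals.
From Coquelicot Require Import Coquelicot.
From mathcomp Require Import ssreflect ssrbool ssrnat div seq prime.

Open Scope R_scope.

Definition tau (n : nat) : nat := size (divisors n).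

(* arithmetic derivative: delta(n) = n * sum_{p^a || n} a/p  (delta(1)=0) *)
Definition adelta (n : nat) : R :=
  INR n * foldr (fun p acc => INR (logn p n) / INR p + acc) 0 (primes n).

Definition cexp (z : C) : C :=
  (exp (Re z) * cos (Im z), exp (Re z) * sin (Im z)).

Definition npow (n : nat) (z : C) : C := cexp (Cmult z (RtoC (ln (INR n)))).

Definition is_zeta (w : C) (Z : C) : Prop :=
  is_series (fun n : nat => Cinv (npow n.+1 w)) Z.

Definition F_term (w : C) (n : nat) : C :=
  if prime n then Cinv (Cminus (npow n (Cplus w (RtoC 1))) (RtoC (INR n)))
  else RtoC 0.

Definition is_F (w : C) (Fv : C) : Prop := is_series (F_term w) Fv.

(* Main.v *)
Require Import Defs.
From Stdlib Require Import Reals Lra Lia.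
From Coquelicot Require Import Coquelicot.
From mathcomp Require Import ssreflect ssrbool ssrnat eqtype seq div prime zify.

Section S.
Local Open Scope R_scope.

Lemma sum_n_ext_zero {G : AbelianMonoid} (h : nat -> G) n N :
  (n <= N)%nat -> (forall k, (n < k)%nat -> (k <= N)%nat -> h k = zero) ->
  sum_n h N = sum_n h n.
Proof.
elim: N => [|N IH] hle hz.
  by have -> : n = 0%nat by apply/eqP; rewrite -leqn0.
case: (ltnP n N.+1) => hlt.
  rewrite sum_Sn IH //.
  - by rewrite hz // plus_zero_r.
  - move=> k h1 h2; apply: hz => //; exact: leqW.
have -> : n = N.+1 by apply/eqP; rewrite eqn_leq hle hlt.
done.
Qed.

Lemma sum_n_zero {G : AbelianMonoid} (h : nat -> G) N :
  (forall k, (k <= N)%nat -> h k = zero) -> sum_n h N = zero.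
Proof.
elim: N => [|N IH] hz; first by rewrite sum_O hz.
rewrite sum_Sn IH ?hz ?plus_zero_r //.
move=> k hk; apply: hz; exact: leqW.
Qed.

Lemma sum_delta {G : AbelianMonoid} (x : G) (t N : nat) :
  sum_n (fun n => if t == n then x else zero) N = if (t <= N)%nat then x else zero.
Proof.
elim: N => [|N IH]; first by rewrite sum_O; case: t => //.
rewrite sum_Sn IH.
case: (ltngtP t N.+1) => h //.
- by rewrite ltnS in h; rewrite h plus_zero_r.
- by rewrite (_ : (t <= N)%N = false) ?plus_zero_r //; rewrite leqNgt ltnW.
- by rewrite h ltnn plus_zero_l.
Qed.

Lemma sum_delta2 {G : AbelianMonoid} (g : nat -> G) (t N : nat) :
  sum_n (fun n => if n == t then g n else zero) N = if (t <= N)%nat then g t else zero.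
Proof.
rewrite -(sum_delta (g t)); apply: sum_n_ext => n.
by case: eqP => [->|]; rewrite ?eqxx //; case: eqP => // ->.
Qed.

Definition gsum {G : AbelianMonoid} (f : nat -> nat -> G) (key : nat -> nat -> nat) (n : nat) : G :=
  sum_n (fun i => sum_n (fun j => if key i j == n then f i j else zero) n) n.

Definition keyok {G : AbelianMonoid} (f : nat -> nat -> G) (key : nat -> nat -> nat) :=
  forall i j, (key i j < i)%nat \/ (key i j < j)%nat -> f i j = zero.

Lemma gsum_ext {G : AbelianMonoid} f key n N : @keyok G f key -> (n <= N)%nat ->
  gsum f key n = sum_n (fun i => sum_n (fun j => if key i j == n then f i j else zero) N) N.
Proof.
move=> hk hn; rewrite /gsum.
rewrite (sum_n_ext_zero _ n N) //.
  apply: sum_n_ext_loc => i hi.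
  symmetry; apply: sum_n_ext_zero => // j hj _.
  case: eqP => // he; apply: hk; right; rewrite he //.
move=> i hi _; apply: sum_n_zero => j _.
case: eqP => // he; apply: hk; left; rewrite he //.
Qed.

Lemma psum_gsum {G : AbelianMonoid} f key N : @keyok G f key ->
  sum_n (gsum f key) N =
  sum_n (fun i => sum_n (fun j => if (key i j <= N)%nat then f i j else zero) N) N.
Proof.
move=> hk.
transitivity (sum_n (fun n => sum_n (fun i => sum_n (fun j => if key i j == n then f i j else zero) N) N) N).
  apply: sum_n_ext_loc => n hn. apply: gsum_ext => //. by apply/leP.
rewrite sum_n_switch; apply: sum_n_ext => i.
rewrite sum_n_switch; apply: sum_n_ext => j.
rewrite -sum_delta; apply: sum_n_ext => n //.
Qed.

End S.


Section S.
Local Open Scope R_scope.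

Lemma sumR_le (h g : nat -> R) N : (forall k, h k <= g k) -> sum_n h N <= sum_n g N.
Proof.
move=> H; elim: N => [|N IH]; first by rewrite !sum_O.
rewrite !sum_Sn; rewrite /plus /=; have := H N.+1; lra.
Qed.

Lemma sumR_nonneg (h : nat -> R) N : (forall k, 0 <= h k) -> 0 <= sum_n h N.
Proof.
move=> H; elim: N => [|N IH]; first by rewrite !sum_O.
rewrite !sum_Sn; rewrite /plus /=; have := H N.+1; lra.
Qed.

Lemma sumR_mono (h : nat -> R) n N : (forall k, 0 <= h k) -> (n <= N)%nat -> sum_n h n <= sum_n h N.
Proof.
move=> H; elim: N => [|N IH] hn.
  have -> : n = 0%nat by apply/eqP; rewrite -leqn0.
  lra.
case: (ltnP n N.+1) => hlt.
  rewrite sum_Sn /plus /=; have := H N.+1; have := IH hlt; lra.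
have -> : n = N.+1 by apply/eqP; rewrite eqn_leq hn hlt.
lra.
Qed.

Lemma series_lim (a : nat -> R) (l : R) : is_series a l -> is_lim_seq (sum_n a) l.
Proof. move=> H; exact H. Qed.

Lemma lim_series (a : nat -> R) (l : R) : is_lim_seq (sum_n a) l -> is_series a l.
Proof. move=> H; exact H. Qed.

Lemma psum_le_series (a : nat -> R) l N : (forall k, 0 <= a k) -> is_series a l -> sum_n a N <= l.
Proof.
move=> H hs; apply: (is_lim_seq_incr_compare _ _ (series_lim _ _ hs)).
move=> n; rewrite sum_Sn /plus /=; have := H n.+1; lra.
Qed.

Lemma lim_fin (u : nat -> nat -> R) (l : nat -> R) K :
  (forall i, is_lim_seq (u i) (l i)) ->
  is_lim_seq (fun M => sum_n (fun i => u i M) K) (sum_n l K).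
Proof.
move=> H; elim: K => [|K IH].
  rewrite sum_O; apply: is_lim_seq_ext (H 0%nat) => M; by rewrite sum_O.
rewrite sum_Sn.
apply: (is_lim_seq_ext (fun M => sum_n (fun i => u i M) K + u K.+1 M)).
  by move=> M; rewrite sum_Sn.
exact: is_lim_seq_plus'.
Qed.

Lemma key_bound (key : nat -> nat -> nat) K M :
  exists N0, forall i j, (i <= K)%nat -> (j <= M)%nat -> (key i j <= N0)%nat.
Proof.
elim: K => [|K [N1 HK]].
  elim: M => [|M [N1 HM]].
    exists (key 0%nat 0%nat) => i j; rewrite !leqn0 => /eqP -> /eqP -> //.
  exists (maxn N1 (key 0%nat M.+1)) => i j hi hj.
  case: (ltnP j M.+1) => h.
    apply: leq_trans (leq_maxl _ _); apply: HM => //.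
  have -> : j = M.+1 by apply/eqP; rewrite eqn_leq hj h.
  move: hi; rewrite leqn0 => /eqP ->; exact: leq_maxr.
have [N2 H2] : exists N2, forall j, (j <= M)%nat -> (key K.+1 j <= N2)%nat.
  elim: M {HK} => [|M [N2 H2]].
    exists (key K.+1 0%nat) => j; rewrite leqn0 => /eqP -> //.
  exists (maxn N2 (key K.+1 M.+1)) => j hj.
  case: (ltnP j M.+1) => h.
    apply: leq_trans (leq_maxl _ _); exact: H2.
  have -> : j = M.+1 by apply/eqP; rewrite eqn_leq hj h.
  exact: leq_maxr.
exists (maxn N1 N2) => i j hi hj.
case: (ltnP i K.+1) => h.
  apply: leq_trans (leq_maxl _ _); exact: HK.
have -> : i = K.+1 by apply/eqP; rewrite eqn_leq hi h.
apply: leq_trans (leq_maxr _ _); exact: H2.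
Qed.

Lemma gsum_pos (f : nat -> nat -> R) key (r : nat -> R) S :
  keyok f key -> (forall i j, 0 <= f i j) ->
  (forall i, is_series (f i) (r i)) -> is_series r S ->
  is_series (gsum f key) S.
Proof.
move=> hk hpos hr hS.
have rpos : forall i, 0 <= r i.
  move=> i; apply: (is_lim_seq_le (fun _ => 0) (sum_n (f i)) 0 (r i)) => //.
  - move=> n; exact: sumR_nonneg.
  - exact: is_lim_seq_const.
  - exact: series_lim.
apply: lim_series; apply/is_lim_seq_spec => eps.
have e2 : 0 < eps / 2 by have := cond_pos eps; lra.
have [K HK] := proj2 (is_lim_seq_spec _ _) (series_lim _ _ hS) (mkposreal _ e2).
have HK' := HK K (le_n K); simpl in HK'.
have hl := lim_fin (fun i M => sum_n (f i) M) r K (fun i => series_lim _ _ (hr i)).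
have [M HM] := proj2 (is_lim_seq_spec _ _) hl (mkposreal _ e2).
have HM' := HM M (le_n M); simpl in HM'.
have [N0 HN0] := key_bound key K M.
exists (N0 + K + M)%nat => N hN; move/leP: hN => hN.
rewrite psum_gsum //.
set D := sum_n _ N.
have hKN : (K <= N)%nat by lia.
have hMN : (M <= N)%nat by lia.
have hN0N : (N0 <= N)%nat by lia.
have Dup : D <= S.
  apply: Rle_trans (psum_le_series r S N rpos hS).
  apply: sumR_le => i.
  apply: Rle_trans (psum_le_series (f i) (r i) N (hpos i) (hr i)).
  apply: sumR_le => j; case: ifP => _; [lra|]; exact: hpos.
have Dlow : sum_n (fun i => sum_n (f i) M) K <= D.
  apply: Rle_trans (_ : sum_n (fun i => sum_n (fun j => if (key i j <= N)%nat then f i j else zero) N) K <= D).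
    apply: Rle_trans (_ : sum_n (fun i => sum_n (fun j => if (key i j <= N)%nat then f i j else zero) M) K <= _).
      right; apply: sum_n_ext_loc => i /leP hi; apply: sum_n_ext_loc => j /leP hj.
      rewrite (_ : (key i j <= N)%nat = true) //; apply: leq_trans hN0N; exact: HN0.
    apply: sumR_le => i; apply: sumR_mono => // j.
    case: ifP => _ //; try exact: hpos; exact: Rle_refl.
  rewrite /D; apply: (sumR_mono (fun i => sum_n (fun j : nat => if (key i j <= N)%N then f i j else zero) N)) => // i; apply: sumR_nonneg => j.
  case: ifP => _ //; try exact: hpos; exact: Rle_refl.
apply: Rabs_def1; move: HK' HM'; rewrite /Rabs; case: Rcase_abs => ?; case: Rcase_abs => ?; simpl; lra.
Qed.

End S.


Section S.
Local Open Scope R_scope.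

Lemma Re_sum (a : nat -> C) N : Re (sum_n a N) = sum_n (fun n => Re (a n)) N.
Proof.
elim: N => [|N IH]; first by rewrite !sum_O.
by rewrite !sum_Sn /= -IH.
Qed.

Lemma Im_sum (a : nat -> C) N : Im (sum_n a N) = sum_n (fun n => Im (a n)) N.
Proof.
elim: N => [|N IH]; first by rewrite !sum_O.
by rewrite !sum_Sn /= -IH.
Qed.

Lemma Re_gsum (f : nat -> nat -> C) key n :
  Re (gsum f key n) = gsum (fun i j => Re (f i j)) key n.
Proof.
rewrite /gsum Re_sum; apply: sum_n_ext => i; rewrite Re_sum; apply: sum_n_ext => j.
by case: ifP.
Qed.

Lemma Im_gsum (f : nat -> nat -> C) key n :
  Im (gsum f key n) = gsum (fun i j => Im (f i j)) key n.
Proof.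
rewrite /gsum Im_sum; apply: sum_n_ext => i; rewrite Im_sum; apply: sum_n_ext => j.
by case: ifP.
Qed.

Lemma Cmod_sum (a : nat -> C) N : Cmod (sum_n a N) <= sum_n (fun n => Cmod (a n)) N.
Proof.
elim: N => [|N IH]; first by rewrite !sum_O; lra.
rewrite !sum_Sn; apply: Rle_trans (Cmod_triangle _ _) _.
rewrite /plus /=; lra.
Qed.

Lemma Cmod_gsum (f : nat -> nat -> C) key n :
  Cmod (gsum f key n) <= gsum (fun i j => Cmod (f i j)) key n.
Proof.
rewrite /gsum; apply: Rle_trans (Cmod_sum _ _) _.
apply: sumR_le => i; apply: Rle_trans (Cmod_sum _ _) _.
apply: sumR_le => j; case: ifP => _; [lra|]; rewrite /zero /= Cmod_0; lra.
Qed.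

Lemma im_le_Cmod (c : C) : Rabs (Im c) <= Cmod c.
Proof. apply: Rle_trans (Rmax_Cmod c); exact: Rmax_r. Qed.

Lemma is_series_Re (a : nat -> C) l : is_series a l -> is_series (fun n => Re (a n)) (Re l).
Proof.
move/filterlim_locally_ball_norm => H.
apply/filterlim_locally_ball_norm => eps.
move: (H eps); apply: filter_imp => n.
rewrite /ball_norm -Re_sum.
move=> h; apply: Rle_lt_trans h.
have := re_le_Cmod (minus (sum_n a n) l).
rewrite /norm /= /abs /=. 
suff -> : (Re (sum_n a n) + - Re l) = Re (minus (sum_n a n) l) by [].
by rewrite /minus /plus /opp /=.
Qed.

Lemma is_series_Im (a : nat -> C) l : is_series a l -> is_series (fun n => Im (a n)) (Im l).
Proof.
move/filterlim_locally_ball_norm => H.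
apply/filterlim_locally_ball_norm => eps.
move: (H eps); apply: filter_imp => n.
rewrite /ball_norm -Im_sum.
move=> h; apply: Rle_lt_trans h.
have := im_le_Cmod (minus (sum_n a n) l).
rewrite /norm /= /abs /=.
suff -> : (Im (sum_n a n) + - Im l) = Im (minus (sum_n a n) l) by [].
by rewrite /minus /plus /opp /=.
Qed.

Lemma Cmod_le_sum (z : C) : Cmod z <= Rabs (Re z) + Rabs (Im z).
Proof.
unfold Cmod. destruct z as [x y]; simpl.
rewrite <- (sqrt_pow2 (Rabs x + Rabs y)) by (generalize (Rabs_pos x) (Rabs_pos y); lra).
apply sqrt_le_1_alt.
rewrite <- (pow2_abs x) at 1; rewrite <- (pow2_abs y) at 1.
generalize (Rabs_pos x) (Rabs_pos y); intros; nra.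
Qed.

Lemma is_series_ReIm (a : nat -> C) l :
  is_series (fun n => Re (a n)) (Re l) -> is_series (fun n => Im (a n)) (Im l) ->
  is_series a l.
Proof.
move/filterlim_locally_ball_norm => H1 /filterlim_locally_ball_norm H2.
apply/filterlim_locally_ball_norm => eps.
have e2 : 0 < eps / 2 by have := cond_pos eps; lra.
apply: (filter_imp _ _ _ (filter_and _ _ (H1 (mkposreal _ e2)) (H2 (mkposreal _ e2)))) => n [].
rewrite /ball_norm -Re_sum -Im_sum => h1 h2.
change (Cmod (minus (sum_n a n) l) < eps).
apply: Rle_lt_trans (Cmod_le_sum _) _.
have -> : Re (minus (sum_n a n) l) = minus (Re (sum_n a n)) (Re l) by [].
have -> : Im (minus (sum_n a n) l) = minus (Im (sum_n a n)) (Im l) by [].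
move: h1 h2; set x := minus (Re _) _; set y := minus (Im _) _.
change (Rabs x < eps/2 -> Rabs y < eps/2 -> Rabs x + Rabs y < eps); lra.
Qed.

Definition posp (x : R) := Rmax x 0.
Definition negp (x : R) := Rmax (- x) 0.

Lemma posp_ge0 x : 0 <= posp x. Proof. exact: Rmax_r. Qed.
Lemma negp_ge0 x : 0 <= negp x. Proof. exact: Rmax_r. Qed.
Lemma posp_le x : posp x <= Rabs x.
Proof. rewrite /posp /Rmax /Rabs; case: Rle_dec; case: Rcase_abs; lra. Qed.
Lemma negp_le x : negp x <= Rabs x.
Proof. rewrite /negp /Rmax /Rabs; case: Rle_dec; case: Rcase_abs; lra. Qed.
Lemma posp_negp x : x = posp x - negp x.
Proof. rewrite /negp /posp /Rmax; case: Rle_dec; case: Rle_dec; lra. Qed.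

Lemma sumR_minus (a b : nat -> R) N : sum_n (fun n => a n - b n) N = sum_n a N - sum_n b N.
Proof.
elim: N => [|N IH]; first by rewrite !sum_O.
rewrite !sum_Sn IH /plus /=; lra.
Qed.

Lemma gsum_minus (a b : nat -> nat -> R) key n :
  gsum (fun i j => a i j - b i j) key n = gsum a key n - gsum b key n.
Proof.
rewrite /gsum -sumR_minus; apply: sum_n_ext => i.
rewrite -sumR_minus; apply: sum_n_ext => j.
case: ifP => _ //; rewrite /zero /=; lra.
Qed.

Lemma ex_series_abs_le (a : nat -> R) (b : nat -> R) :
  (forall n, Rabs (a n) <= b n) -> ex_series b -> ex_series a.
Proof. move=> H; apply: ex_series_le => n; exact: H. Qed.

Lemma part_series (u : nat -> nat -> R) (p : R -> R) key :
  keyok u key ->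
  (forall x, 0 <= p x) -> (forall x, p x <= Rabs x) -> p 0 = 0 ->
  (forall i, ex_series (fun j => Rabs (u i j))) ->
  ex_series (fun i => Series (fun j => Rabs (u i j))) ->
  (forall i, ex_series (fun j => p (u i j))) /\ ex_series (fun i => Series (fun j => p (u i j))) /\ is_series (gsum (fun i j => p (u i j)) key) (Series (fun i => Series (fun j => p (u i j)))).
Proof.
move=> hk p0 pabs pz hr hS.
have hr' : forall i, ex_series (fun j => p (u i j)).
  move=> i; apply: ex_series_abs_le (hr i) => j.
  rewrite Rabs_pos_eq //; exact: pabs.
have hS' : ex_series (fun i => Series (fun j => p (u i j))).
  apply: ex_series_abs_le hS => i.
  rewrite Rabs_pos_eq; last first.
    have -> : 0 = Series (fun _ => 0) by rewrite (is_series_unique _ 0) //; apply: lim_series; apply: (is_lim_seq_ext (fun _ => 0)); [move=> N; elim: N => [|N IH]; rewrite ?sum_O ?sum_Sn -?IH /plus /=; lra| exact: is_lim_seq_const].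
    apply: Series_le => // j; split; [lra|exact: p0].
  apply: Series_le; [move=> j; split; [exact: p0|exact: pabs] | exact: hr].
split; first by []. split; first by [].
apply: (gsum_pos _ _ (fun i => Series (fun j => p (u i j)))).
- move=> i j hij; rewrite (hk i j hij); exact: pz.
- move=> i j; exact: p0.
- move=> i; exact: Series_correct.
- exact: Series_correct.
Qed.

Lemma gsumR_series (u : nat -> nat -> R) key :
  keyok u key ->
  (forall i, ex_series (fun j => Rabs (u i j))) ->
  ex_series (fun i => Series (fun j => Rabs (u i j))) ->
  is_series (gsum u key) (Series (fun i => Series (u i))).
Proof.
move=> hk hr hS.
have pz : posp 0 = 0 by rewrite /posp Rmax_right; lra.
have nz : negp 0 = 0 by rewrite /negp Rmax_right; lra.
have [ha [hSa hga]] := part_series u posp key hk posp_ge0 posp_le pz hr hS.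
have [hb [hSb hgb]] := part_series u negp key hk negp_ge0 negp_le nz hr hS.
have E : forall n, gsum u key n = gsum (fun i j => posp (u i j)) key n - gsum (fun i j => negp (u i j)) key n.
  move=> n; rewrite -gsum_minus; apply: sum_n_ext => i; apply: sum_n_ext => j.
  by rewrite -posp_negp.
apply: is_series_ext.
  move=> n; symmetry; exact: E.
have -> : Series (fun i => Series (u i)) =
   Series (fun i => Series (fun j => posp (u i j))) - Series (fun i => Series (fun j => negp (u i j))).
  rewrite -Series_minus //; apply: Series_ext => i.
  rewrite -Series_minus //; apply: Series_ext => j; exact: posp_negp.
exact: (is_series_minus _ _ _ _ hga hgb).
Qed.

Lemma keyok_Re (f : nat -> nat -> C) key : keyok f key -> keyok (fun i j => Re (f i j)) key.
Proof. by move=> h i j hij; rewrite (h i j hij). Qed.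
Lemma keyok_Im (f : nat -> nat -> C) key : keyok f key -> keyok (fun i j => Im (f i j)) key.
Proof. by move=> h i j hij; rewrite (h i j hij). Qed.
Lemma keyok_Cmod (f : nat -> nat -> C) key : keyok f key -> keyok (fun i j => Cmod (f i j)) key.
Proof. by move=> h i j hij; rewrite (h i j hij) /zero /= Cmod_0. Qed.

Lemma comp_hyps (f : nat -> nat -> C) (q : C -> R) :
  (forall z, Rabs (q z) <= Cmod z) ->
  (forall i, ex_series (fun j => Cmod (f i j))) ->
  ex_series (fun i => Series (fun j => Cmod (f i j))) ->
  (forall i, ex_series (fun j => Rabs (q (f i j)))) /\ ex_series (fun i => Series (fun j => Rabs (q (f i j)))).
Proof.
move=> hq hr hS.
have hr' : forall i, ex_series (fun j => Rabs (q (f i j))).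
  move=> i; apply: ex_series_abs_le (hr i) => j; rewrite Rabs_Rabsolu; exact: hq.
split=> //.
apply: ex_series_abs_le hS => i.
have h0 : 0 <= Series (fun j => Rabs (q (f i j))).
  have -> : 0 = Series (fun _ => 0) by rewrite (is_series_unique _ 0) //; apply: lim_series; apply: (is_lim_seq_ext (fun _ => 0)); [move=> N; elim: N => [|N IH]; rewrite ?sum_O ?sum_Sn -?IH /plus /=; lra| exact: is_lim_seq_const].
  apply: Series_le => // j; split; [lra|exact: Rabs_pos].
rewrite Rabs_pos_eq //.
apply: Series_le; [move=> j; split; [exact: Rabs_pos|exact: hq] | exact: hr].
Qed.

Lemma gsumC_series (f : nat -> nat -> C) key (s : nat -> C) S :
  keyok f key ->
  (forall i, ex_series (fun j => Cmod (f i j))) ->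
  ex_series (fun i => Series (fun j => Cmod (f i j))) ->
  (forall i, is_series (f i) (s i)) -> is_series s S ->
  is_series (gsum f key) S.
Proof.
move=> hk hr hS hs hsS.
apply: is_series_ReIm.
- have [h1 h2] := comp_hyps f (fun z => Re z) re_le_Cmod hr hS.
  apply: (is_series_ext (gsum (fun i j => Re (f i j)) key)).
    by move=> n; rewrite Re_gsum.
  have -> : Re S = Series (fun i => Series (fun j => Re (f i j))).
    rewrite -(is_series_unique _ _ (is_series_Re _ _ hsS)).
    apply: Series_ext => i; symmetry; exact: is_series_unique (is_series_Re _ _ (hs i)).
  exact: gsumR_series (keyok_Re _ _ hk) h1 h2.
- have [h1 h2] := comp_hyps f (fun z => Im z) im_le_Cmod hr hS.
  apply: (is_series_ext (gsum (fun i j => Im (f i j)) key)).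
    by move=> n; rewrite Im_gsum.
  have -> : Im S = Series (fun i => Series (fun j => Im (f i j))).
    rewrite -(is_series_unique _ _ (is_series_Im _ _ hsS)).
    apply: Series_ext => i; symmetry; exact: is_series_unique (is_series_Im _ _ (hs i)).
  exact: gsumR_series (keyok_Im _ _ hk) h1 h2.
Qed.

Lemma gsumC_abs (f : nat -> nat -> C) key :
  keyok f key ->
  (forall i, ex_series (fun j => Cmod (f i j))) ->
  ex_series (fun i => Series (fun j => Cmod (f i j))) ->
  ex_series (fun n => Cmod (gsum f key n)).
Proof.
move=> hk hr hS.
have hg : is_series (gsum (fun i j => Cmod (f i j)) key) (Series (fun i => Series (fun j => Cmod (f i j)))).
  apply: (gsum_pos _ _ (fun i => Series (fun j => Cmod (f i j)))).
  - exact: keyok_Cmod.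
  - move=> i j; exact: Cmod_ge_0.
  - move=> i; exact: Series_correct.
  - exact: Series_correct.
apply: (ex_series_le _ (gsum (fun i j => Cmod (f i j)) key)); last by eexists; exact: hg.
move=> n; change (Rabs (Cmod (gsum f key n)) <= gsum (fun i j => Cmod (f i j)) key n).
rewrite Rabs_pos_eq; [exact: Cmod_gsum | exact: Cmod_ge_0].
Qed.

End S.


Section S.
Local Open Scope R_scope.

Lemma cexp_add a b : cexp (a + b)%C = (cexp a * cexp b)%C.
Proof.
rewrite /cexp; destruct a as [x y]; destruct b as [u v]; simpl.
rewrite exp_plus cos_plus sin_plus.
apply: injective_projections; simpl; ring.
Qed.

Lemma npow_add n z1 z2 : npow n (z1 + z2)%C = (npow n z1 * npow n z2)%C.
Proof.
rewrite /npow -cexp_add; f_equal.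
destruct z1, z2; apply: injective_projections; simpl; ring.
Qed.

Lemma INR_pos n : (0 < n)%nat -> 0 < INR n.
Proof. move=> h; apply: lt_0_INR; apply/ltP; exact: h. Qed.

Lemma npow_mul m n z : (0 < m)%nat -> (0 < n)%nat -> npow (m * n) z = (npow m z * npow n z)%C.
Proof.
move=> hm hn; rewrite /npow -cexp_add; f_equal.
rewrite (_ : INR (m * n) = INR m * INR n); last by rewrite -mult_INR.
rewrite ln_mult; try exact: INR_pos.
destruct z; apply: injective_projections; simpl; ring.
Qed.

Lemma npow_0 n : npow n 0 = 1%C.
Proof.
rewrite /npow /cexp; apply: injective_projections; simpl;
rewrite (_ : 0 * ln (INR n) - 0 * 0 = 0); try ring;
rewrite (_ : 0 * 0 + 0 * ln (INR n) = 0); try ring.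
  by rewrite exp_0 cos_0; ring.
by rewrite exp_0 sin_0; ring.
Qed.

Lemma npow_1 n : (0 < n)%nat -> npow n 1 = RtoC (INR n).
Proof.
move=> hn; rewrite /npow /cexp; apply: injective_projections; simpl.
  rewrite (_ : 1 * ln (INR n) - 0 * 0 = ln (INR n)); last ring.
  rewrite (_ : 1 * 0 + 0 * ln (INR n) = 0); last ring.
  rewrite exp_ln ?cos_0; [ring|exact: INR_pos].
rewrite (_ : 1 * 0 + 0 * ln (INR n) = 0); last ring.
rewrite sin_0; ring.
Qed.

Lemma Cmod_cexp z : Cmod (cexp z) = exp (Re z).
Proof.
rewrite /Cmod /cexp /=.
rewrite (_ : (exp (fst z) * cos (snd z)) ^ 2 + (exp (fst z) * sin (snd z)) ^ 2 = (exp (fst z))^2); last first.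
  have := sin2_cos2 (snd z); rewrite /Rsqr; move=> h; nra.
apply: sqrt_pow2; have := exp_pos (fst z); lra.
Qed.

Lemma Cmod_npow n z : Cmod (npow n z) = exp (Re z * ln (INR n)).
Proof. rewrite /npow Cmod_cexp; f_equal; destruct z; simpl; ring. Qed.

Lemma npow_ne0 n z : npow n z <> 0%C.
Proof.
move=> h; have := Cmod_npow n z; rewrite h Cmod_0 => h2.
have := exp_pos (Re z * ln (INR n)); lra.
Qed.

Lemma npow_inv n z : Cinv (npow n z) = npow n (- z)%C.
Proof.
have h : (npow n z * npow n (-z))%C = 1%C.
  rewrite -npow_add (_ : (z + - z)%C = 0%C) ?npow_0 //.
  destruct z; apply: injective_projections; simpl; ring.
have hz := npow_ne0 n z.
rewrite -(Cmult_1_r (Cinv _)) -h Cmult_assoc Cinv_l // Cmult_1_l.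
done.
Qed.

Lemma npow_pow p k z : (0 < p)%nat -> npow (p ^ k) z = pow_n (npow p z) k.
Proof.
move=> hp; elim: k => [|k IH].
  rewrite expn0 /= /npow /cexp (_ : INR 1 = 1) // ln_1.
  apply: injective_projections; simpl;
  rewrite (_ : fst z * 0 - snd z * 0 = 0); try ring;
  rewrite (_ : fst z * 0 + snd z * 0 = 0); try ring.
    by rewrite exp_0 cos_0 /one /=; ring.
  by rewrite exp_0 sin_0 /one /=; ring.
rewrite expnS npow_mul ?IH //; last by rewrite expn_gt0 hp.
Qed.

End S.


Section S.
Local Open Scope R_scope.

Lemma exp_ge1 y : 1 + y <= exp y.
Proof.
case: (Req_dec y 0) => [->|h]; first by rewrite exp_0; lra.
have := exp_ineq1 y h; lra.
Qed.

Lemma ln_le_sub1 y : 0 < y -> ln y <= y - 1.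
Proof. move=> hy; have := exp_ge1 (ln y); rewrite exp_ln //; lra. Qed.

Lemma pterm_bound (t : R) (m : R) : 0 < t -> 1 < m ->
  exp (- (1 + t) * ln m) <= (exp (- t * ln (m - 1)) - exp (- t * ln m)) / t.
Proof.
move=> ht hm.
set L := ln m; set L' := ln (m - 1).
have hLL : L - L' >= 1 / m.
  have h1 : ln ((m - 1) / m) <= (m - 1) / m - 1 by apply: ln_le_sub1; apply: Rdiv_lt_0_compat; lra.
  rewrite /Rdiv ln_mult in h1; [|lra|apply: Rinv_0_lt_compat; lra].
  rewrite ln_Rinv in h1; last lra.
  rewrite /L /L'.
  have e : (m - 1) * / m - 1 = - (1 / m) by field; lra.
  rewrite e in h1; lra.
have e1 : exp (- t * L') = exp (- t * L) * exp (t * (L - L')).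
  by rewrite -exp_plus; f_equal; ring.
have e2 : exp (t * (L - L')) >= 1 + t * (1 / m).
  have := exp_ge1 (t * (L - L')); have : t * (L - L') >= t * (1/m) by nra. lra.
have e3 : exp (- (1 + t) * L) = exp (- t * L) * (1 / m).
  rewrite (_ : - (1 + t) * L = - t * L + - L) ?exp_plus; last ring.
  rewrite exp_Ropp /L exp_ln; [|lra]; field; lra.
have hE := exp_pos (- t * L).
apply (Rmult_le_reg_r t); [exact ht|].
rewrite /Rdiv Rmult_assoc Rinv_l; [|lra].
rewrite e1 e3.
have hm' : 0 < 1 / m by apply: Rdiv_lt_0_compat; lra.
nra.
Qed.

Lemma pseries (sig : R) : 1 < sig -> ex_series (fun n => exp (- sig * ln (INR n.+1))).
Proof.
move=> hs; set t := sig - 1.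
have ht : 0 < t by rewrite /t; lra.
set b := fun n => exp (- sig * ln (INR n.+1)).
have bpos : forall n, 0 <= b n by move=> n; apply: Rlt_le; apply: exp_pos.
have bound : forall N, sum_n b N <= 1 + (1 - exp (- t * ln (INR N.+1))) / t.
  elim=> [|N IH].
    rewrite sum_O /b (_ : INR 1 = 1) // ln_1 !Rmult_0_r exp_0.
    rewrite (_ : (1 - 1) / t = 0); [lra| field; lra].
  rewrite sum_Sn.
  have hb := pterm_bound t (INR N.+2) ht.
  rewrite (_ : - (1 + t) = - sig) in hb; last by rewrite /t; ring.
  rewrite (_ : INR N.+2 - 1 = INR N.+1) in hb; last by rewrite !S_INR; ring.
  have : 1 < INR N.+2 by rewrite !S_INR; have := pos_INR N; lra.
  move=> h2; have hb' := hb h2.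
  rewrite /b in IH *.
  change (plus ?a ?b) with (Rplus a b).
  apply: Rle_trans (Rplus_le_compat _ _ _ _ IH hb') _.
  right; field; lra.
have [l hl] : ex_finite_lim_seq (sum_n b).
  apply: (ex_finite_lim_seq_incr _ (1 + 1 / t)).
    move=> n; rewrite sum_Sn /plus /=; have := bpos n.+1; lra.
  move=> n; apply: Rle_trans (bound n) _.
  have := exp_pos (- t * ln (INR n.+1)).
  move=> h; apply: Rplus_le_compat_l; rewrite /Rdiv; apply: Rmult_le_compat_r.
    by apply: Rlt_le; apply: Rinv_0_lt_compat.
  lra.
exists l; exact: lim_series.
Qed.

End S.


Section S.
Local Open Scope R_scope.

Lemma Cmod_pow_n (x : C) k : Cmod (pow_n x k) = (Cmod x) ^ k.
Proof.
elim: k => [|k IH] /=; first by rewrite /one /= Cmod_1.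
by rewrite /mult /= Cmod_mult IH.
Qed.

Lemma geom_psum (x : C) N :
  (sum_n (fun k => pow_n x (S k)) N * (1 - x))%C = (x - pow_n x (N.+2))%C.
Proof.
elim: N => [|N IH].
  rewrite sum_O /= /mult /one /=; ring.
rewrite sum_Sn.
change (plus ?a ?b) with (Cplus a b).
rewrite Cmult_plus_distr_r IH.
rewrite (_ : pow_n x N.+3 = (x * pow_n x N.+2)%C) //.
rewrite (_ : pow_n x N.+2 = (x * pow_n x N.+1)%C) //.
ring.
Qed.

Lemma geomC (x : C) : Cmod x < 1 ->
  is_series (fun k => pow_n x (S k)) (x / (1 - x))%C.
Proof.
move=> hx.
have h1 : (1 - x)%C <> 0%C.
  move=> h; have : x = 1%C by rewrite -[x]Cplus_0_l -h; ring.
  move=> e; rewrite e Cmod_1 in hx; lra.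
have hm : 0 < Cmod (1 - x) by apply/Cmod_gt_0.
apply/filterlim_locally_ball_norm => eps.
have hg := is_lim_seq_geom (Cmod x).
rewrite Rabs_pos_eq in hg; [|exact: Cmod_ge_0].
have he : 0 < eps * Cmod (1 - x) by apply: Rmult_lt_0_compat => //; apply: cond_pos.
have [N HN] := proj2 (is_lim_seq_spec _ _) (hg hx) (mkposreal _ he).
exists N => n hn.
rewrite /ball_norm.
change (Cmod (sum_n (fun k => pow_n x (S k)) n - x / (1 - x))%C < eps).
have -> : (sum_n (fun k => pow_n x (S k)) n - x / (1 - x))%C = (- pow_n x n.+2 / (1 - x))%C.
  rewrite -[sum_n _ _]Cmult_1_r -(Cinv_r (1 - x)) //.
  rewrite (_ : (sum_n (fun k => pow_n x (S k)) n * ((1 - x) * / (1 - x)))%C = (sum_n (fun k => pow_n x (S k)) n * (1 - x)) * / (1 - x))%C; last ring.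
  rewrite geom_psum; field; exact: h1.
rewrite Cmod_div // Cmod_opp Cmod_pow_n.
have h : Cmod x ^ n.+2 < eps * Cmod (1 - x).
  have := HN n.+2 ltac:(lia).
  rewrite Rminus_0_r Rabs_pos_eq //; apply: pow_le; apply: Cmod_ge_0.
 apply (Rmult_lt_reg_r (Cmod (1 - x))) => //.
rewrite /Rdiv Rmult_assoc Rinv_l; lra.
Qed.

End S.


Section S.
Local Open Scope R_scope.

Definition key1 (i j : nat) : nat := (i.+1 * j.+1).-1.
Definition Lr (N : nat) : R := foldr (fun p acc => INR (logn p N) / INR p + acc) 0 (primes N).

Lemma key1_eq i j n : (key1 i j == n) = (i.+1 * j.+1 == n.+1)%nat.
Proof.
rewrite /key1; have : (0 < i.+1 * j.+1)%nat by rewrite muln_gt0.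
by case: (i.+1 * j.+1)%nat.
Qed.

Lemma key1_ge i j : (i <= key1 i j)%nat /\ (j <= key1 i j)%nat.
Proof. rewrite /key1; split; nia. Qed.

Lemma keyok1 {G : AbelianMonoid} (f : nat -> nat -> G) : keyok f key1.
Proof. move=> i j; have := key1_ge i j; lia. Qed.

Lemma count_j (x : R) i n :
  sum_n (fun j => if key1 i j == n then x else 0) n = if (i.+1 %| n.+1)%nat then x else 0.
Proof.
case: ifP => hd.
  move/dvdnP: hd => [e he].
  have e0 : (0 < e)%nat by case: e he => //.
  have hj : forall j, (key1 i j == n) = (j == e.-1).
    move=> j; rewrite key1_eq he [(e * _)%nat]mulnC eqn_pmul2l //.
    by case: e {he} e0.
  rewrite (sum_n_ext _ (fun j => if j == e.-1 then x else zero)); last by move=> j; rewrite hj.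
  rewrite sum_delta2; case: ifP => // h; exfalso; move/negbT: h; rewrite -ltnNge.
  have : (e <= n.+1)%nat by rewrite he; apply: leq_pmulr.
  lia.
apply: sum_n_zero => j _; case: ifP => // h; exfalso.
move: h; rewrite key1_eq => /eqP h; move/negbT: hd; rewrite -h dvdn_mulr //.
Qed.

Lemma count_iota (P : nat -> bool) n :
  INR (count P (iota 1 n.+1)) = sum_n (fun i => if P i.+1 then 1 else 0) n.
Proof.
elim: n => [|n IH]; first by rewrite sum_O /=; case: (P 1%nat).
have -> : iota 1 n.+2 = iota 1 n.+1 ++ [:: n.+2] by rewrite -[n.+2]addn1 iotaD add1n addn1.
rewrite sum_Sn -IH count_cat plus_INR /=.
by case: (P n.+2); rewrite /plus /=; lra.
Qed.

Lemma tau_count n : INR (tau n.+1) = sum_n (fun i => if (i.+1 %| n.+1)%nat then 1 else 0) n.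
Proof.
rewrite -(count_iota (fun d => d %| n.+1)%nat) /tau -size_filter.
f_equal; apply: perm_size; apply: uniq_perm.
- exact: divisors_uniq.
- apply: filter_uniq; exact: iota_uniq.
move=> d; rewrite -dvdn_divisors // mem_filter mem_iota.
case hd: (d %| n.+1)%nat => //=.
have := dvdn_leq (ltn0Sn n) hd.
have : (0 < d)%nat by case: d hd => //; rewrite dvd0n.
lia.
Qed.

Lemma gsum_one n : gsum (fun _ _ => 1) key1 n = INR (tau n.+1).
Proof.
rewrite tau_count /gsum; apply: sum_n_ext => i; exact: count_j.
Qed.

Lemma foldr_sum (s : seq nat) (g : nat -> R) M :
  uniq s -> (forall x, x \in s -> (x <= M)%nat) ->
  foldr (fun p acc => g p + acc) 0 s = sum_n (fun q => if q \in s then g q else 0) M.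
Proof.
elim: s => [|x s IH] /=.
  by move=> _ _; rewrite sum_n_zero.
move=> /andP [hx hu] hM.
rewrite IH //; last by move=> y hy; apply: hM; rewrite inE hy orbT.
have -> : sum_n (fun q => if q \in x :: s then g q else 0) M =
          plus (sum_n (fun q => if q == x then g q else zero) M) (sum_n (fun q => if q \in s then g q else 0) M).
  rewrite -sum_n_plus; apply: sum_n_ext => q.
  rewrite inE; case: eqP => [->|] /=.
    by rewrite (negbTE hx) /plus /zero /=; ring.
  by move=> _; rewrite /plus /zero /=; ring.
rewrite sum_delta2 hM ?inE ?eqxx //.
Qed.

Lemma Lr_sum N M : (0 < N)%nat -> (N <= M)%nat ->
  Lr N = sum_n (fun q => INR (logn q N) / INR q) M.
Proof.
move=> hN hM; rewrite /Lr (foldr_sum _ (fun p => INR (logn p N) / INR p) M).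
- apply: sum_n_ext => q; case: ifP => // h.
  rewrite lognE -mem_primes h /= /Rdiv; ring.
- exact: primes_uniq.
- move=> x; rewrite mem_primes => /and3P [_ _ hd].
  apply: leq_trans hM; exact: dvdn_leq.
Qed.

Lemma Lr_mul a b : (0 < a)%nat -> (0 < b)%nat -> Lr (a * b) = Lr a + Lr b.
Proof.
move=> ha hb.
have hab : (0 < a * b)%nat by rewrite muln_gt0 ha hb.
rewrite (Lr_sum _ (a * b)) // (Lr_sum a (a * b)) //; last by rewrite leq_pmulr.
rewrite (Lr_sum b (a * b)) //; last by rewrite leq_pmull.
have -> : forall u v : R, u + v = plus u v by [].
rewrite -sum_n_plus; apply: sum_n_ext => q.
rewrite lognM // plus_INR /plus /=; rewrite /Rdiv; ring.
Qed.

Lemma gsum_ext_key {G : AbelianMonoid} (f g : nat -> nat -> G) key n :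
  (forall i j, key i j = n -> f i j = g i j) -> gsum f key n = gsum g key n.
Proof.
move=> H; rewrite /gsum; apply: sum_n_ext => i; apply: sum_n_ext => j.
case: eqP => // h; exact: H.
Qed.

Lemma gsum_plus {G : AbelianMonoid} (f g : nat -> nat -> G) key n :
  gsum (fun i j => plus (f i j) (g i j)) key n = plus (gsum f key n) (gsum g key n).
Proof.
rewrite /gsum -sum_n_plus; apply: sum_n_ext => i.
rewrite -sum_n_plus; apply: sum_n_ext => j.
by case: ifP => _ //; rewrite plus_zero_r.
Qed.

Lemma gsumR_scal (f : nat -> nat -> R) c key n :
  gsum (fun i j => c * f i j) key n = c * gsum f key n.
Proof.
rewrite /gsum.
have -> : forall h : nat -> R, c * sum_n h n = mult c (sum_n h n) by [].
rewrite -sum_n_mult_l; apply: sum_n_ext => i.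
rewrite -sum_n_mult_l; apply: sum_n_ext => j.
by case: ifP => _ //; rewrite /mult /zero /=; ring.
Qed.

Lemma gsum_swap1 (f : nat -> nat -> R) n :
  gsum (fun i j => f j i) key1 n = gsum f key1 n.
Proof.
rewrite /gsum sum_n_switch; apply: sum_n_ext => i; apply: sum_n_ext => j.
by rewrite !key1_eq mulnC.
Qed.

Lemma NTB n : INR (tau n.+1) * Lr n.+1 = 2 * gsum (fun i j => Lr i.+1) key1 n.
Proof.
rewrite -gsum_one -{1}[Lr n.+1]Rmult_1_r Rmult_comm -gsumR_scal.
rewrite (gsum_ext_key _ (fun i j => plus (Lr i.+1) (Lr j.+1))); last first.
  move=> i j h.
  have e : (n.+1 = i.+1 * j.+1)%nat by rewrite -h /key1 prednK // muln_gt0.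
  by rewrite e Lr_mul // /plus /=; ring.
rewrite gsum_plus (gsum_swap1 (fun i j => Lr i.+1)) /plus /=; ring.
Qed.

End S.


Section S.
Local Open Scope R_scope.

Definition key2 (i k : nat) : nat := (i.+1 ^ k.+1).-1.
Definition cpr (p k : nat) : R := if prime p.+1 then / INR p.+1 else 0.
Definition lam (n : nat) : R := gsum cpr key2 n.

Lemma key2_ge i k : prime i.+1 -> (i <= key2 i k)%nat /\ (k <= key2 i k)%nat.
Proof.
move=> hp; have h1 : (1 < i.+1)%nat by apply: prime_gt1.
have h2 := ltn_expl k.+1 h1.
have h3 : (i.+1 ^ 1 <= i.+1 ^ k.+1)%nat by rewrite leq_pexp2l.
rewrite expn1 in h3; rewrite /key2; split; lia.
Qed.

Lemma keyok2 {G : AbelianMonoid} (f : nat -> nat -> G) :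
  (forall i k, ~~ prime i.+1 -> f i k = zero) -> keyok f key2.
Proof.
move=> H i k hik; case hp: (prime i.+1).
  have := key2_ge i k hp; lia.
apply: H; by rewrite hp.
Qed.

Lemma sum_lt (c : R) L n : (L <= n.+1)%nat ->
  sum_n (fun k => if (k < L)%nat then c else 0) n = c * INR L.
Proof.
move=> hL.
suff : sum_n (fun k => if (k < L)%nat then c else 0) n = c * INR (minn L n.+1).
  by move=> ->; rewrite (_ : minn L n.+1 = L) //; lia.
elim: n {hL} => [|n IH].
  rewrite sum_O; case: L => [|L] /=; ring.
rewrite sum_Sn IH /plus /=.
case: ifP => h.
  rewrite (_ : minn L n.+2 = (minn L n.+1).+1); last lia.
  rewrite S_INR; ring.
rewrite (_ : minn L n.+2 = minn L n.+1); [ring|lia].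
Qed.

Lemma sum_shift (h : nat -> R) N : sum_n h N.+1 = h 0%nat + sum_n (fun k => h k.+1) N.
Proof.
elim: N => [|N IH]; first by rewrite sum_Sn !sum_O.
rewrite sum_Sn IH sum_Sn /plus /=; ring.
Qed.

Lemma sum_if (b : bool) (h : nat -> R) N :
  (if b then sum_n h N else 0) = sum_n (fun k => if b then h k else 0) N.
Proof. case: b => //; by rewrite sum_n_zero. Qed.

Lemma logn_lt p m : prime p -> (0 < m)%nat -> (logn p m < m)%nat.
Proof.
move=> hp hm.
have h1 : (p ^ logn p m <= m)%nat by apply: dvdn_leq => //; rewrite pfactor_dvdn.
have := ltn_expl (logn p m) (prime_gt1 hp); lia.
Qed.

Lemma NT4 n : gsum (fun i j => lam i) key1 n = Lr n.+1.
Proof.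
rewrite /gsum.
rewrite (sum_n_ext _ (fun i => if (i.+1 %| n.+1)%nat then lam i else 0)); last first.
  by move=> i; rewrite count_j.
rewrite (sum_n_ext_loc _ (fun i => sum_n (fun p => sum_n (fun k =>
      if (i.+1 %| n.+1)%nat then (if key2 p k == i then cpr p k else 0) else 0) n) n)); last first.
  move=> i /leP hi; rewrite /lam (gsum_ext _ _ i n) //; last first.
    apply: keyok2 => p k hp; by rewrite /cpr (negbTE hp).
  rewrite sum_if; apply: sum_n_ext => p; rewrite sum_if //.
rewrite sum_n_switch.
rewrite (sum_n_ext _ (fun p => if prime p.+1 then INR (logn p.+1 n.+1) / INR p.+1 else 0)); last first.
  move=> p.
  rewrite sum_n_switch.
  case hp: (prime p.+1); last first.
    by apply: sum_n_zero => k _; apply: sum_n_zero => i _; rewrite /cpr hp; case: ifP => //; case: ifP.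
  rewrite (sum_n_ext _ (fun k => if (k < logn p.+1 n.+1)%nat then / INR p.+1 else 0)); last first.
    move=> k.
    rewrite (sum_n_ext _ (fun i => if key2 p k == i then (if ((key2 p k).+1 %| n.+1)%nat then cpr p k else 0) else zero)); last first.
      by move=> i; case: eqP => [<-|]; case: ifP.
    rewrite sum_delta.
    have e : (key2 p k).+1 = (p.+1 ^ k.+1)%nat by rewrite /key2 prednK // expn_gt0.
    rewrite e pfactor_dvdn // /cpr hp.
    case: ifP => h1; case: ifP => h2 //.
    exfalso; move/negbT: h1; rewrite -ltnNge => h1.
    have := logn_lt _ _ hp (ltn0Sn n); rewrite /key2 in h1.
    have : (p.+1 ^ k.+1 <= n.+1)%nat by apply: dvdn_leq => //; rewrite pfactor_dvdn.
    lia.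
  rewrite sum_lt; first by rewrite Rmult_comm.
  have := logn_lt _ _ hp (ltn0Sn n); lia.
rewrite (Lr_sum n.+1 n.+1) // sum_shift.
rewrite (_ : INR (logn 0 n.+1) / INR 0 = 0); last by rewrite /= /Rdiv; ring.
rewrite Rplus_0_l; apply: sum_n_ext => p.
case: ifP => // h; rewrite lognE h /= /Rdiv; ring.
Qed.

End S.


Section S.
Local Open Scope R_scope.

Lemma sumC_factor (h : nat -> R) (c : C) N :
  sum_n (fun k => (RtoC (h k) * c)%C) N = (RtoC (sum_n h N) * c)%C.
Proof.
elim: N => [|N IH]; first by rewrite !sum_O.
rewrite !sum_Sn IH.
change (plus (sum_n h N) (h N.+1)) with (Rplus (sum_n h N) (h N.+1)).
change (plus ?a ?b) with (Cplus a b).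
by rewrite RtoC_plus Cmult_plus_distr_r.
Qed.

Lemma gsum_factor (f : nat -> nat -> C) (g : nat -> nat -> R) (c : C) key n :
  (forall i j, key i j = n -> f i j = (RtoC (g i j) * c)%C) ->
  gsum f key n = (RtoC (gsum g key n) * c)%C.
Proof.
move=> H; rewrite (gsum_ext_key _ (fun i j => (RtoC (g i j) * c)%C)) //.
rewrite /gsum -sumC_factor; apply: sum_n_ext => i.
rewrite -sumC_factor; apply: sum_n_ext => j.
case: ifP => _ //; rewrite /zero /=; ring.
Qed.

Lemma Rle_ser_nonneg (a : nat -> R) : (forall n, 0 <= a n) -> ex_series a -> 0 <= Series a.
Proof.
move=> H [l hl]; rewrite (is_series_unique _ _ hl).
apply: Rle_trans (psum_le_series a l 0 H hl); rewrite sum_O; exact: H.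
Qed.

Lemma Cmod_series_le (a : nat -> C) (l : C) : is_series a l -> ex_series (fun n => Cmod (a n)) ->
  Cmod l <= Series (fun n => Cmod (a n)).
Proof.
move=> hl [L hL]; rewrite (is_series_unique _ _ hL).
apply: le_epsilon => eps he.
move/filterlim_locally_ball_norm: hl => hl.
have [N HN] := hl (mkposreal _ he).
have h1 := HN N (le_n N); rewrite /ball_norm in h1.
set x : C := sum_n a N.
change (Cmod (x - l)%C < eps) in h1.
have h2 := Cmod_sum a N.
have h3 := psum_le_series (fun n => Cmod (a n)) L N (fun n => Cmod_ge_0 _) hL.
have h4 : Cmod l <= Cmod x + Cmod (x - l)%C.
  rewrite -[Cmod (x - l)%C]Cmod_opp.
  apply: Rle_trans (Cmod_triangle _ _).
  right; f_equal; ring.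
change (Cmod x <= sum_n (fun n : nat => Cmod (a n)) N) in h2.
lra.
Qed.

Lemma rows_ex (f : nat -> nat -> C) (s : nat -> C) :
  (forall i, is_series (f i) (s i)) ->
  (forall i, ex_series (fun j => Cmod (f i j))) ->
  ex_series (fun i => Series (fun j => Cmod (f i j))) ->
  ex_series s.
Proof.
move=> hs hr hS.
apply: (ex_series_le _ (fun i => Series (fun j => Cmod (f i j)))) => // i.
exact: Cmod_series_le.
Qed.

Lemma prodC (A B : nat -> C) (a b : C) :
  is_series A a -> is_series B b ->
  ex_series (fun n => Cmod (A n)) -> ex_series (fun n => Cmod (B n)) ->
  is_series (gsum (fun i j => (A i * B j)%C) key1) (a * b)%C /\
  ex_series (fun n => Cmod (gsum (fun i j => (A i * B j)%C) key1 n)).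
Proof.
move=> hA hB [la hla] [lb hlb].
have hr : forall i, ex_series (fun j => Cmod (A i * B j)%C).
  move=> i; apply: (ex_series_ext (fun j => scal (Cmod (A i)) (Cmod (B j)))).
    by move=> j; rewrite Cmod_mult.
  apply: ex_series_scal_l; by exists lb.
have hS : ex_series (fun i => Series (fun j => Cmod (A i * B j)%C)).
  apply: (ex_series_ext (fun i => Cmod (A i) * lb)).
    move=> i; rewrite (Series_ext _ (fun j => Cmod (A i) * Cmod (B j))); last by move=> j; rewrite Cmod_mult.
    by rewrite Series_scal_l (is_series_unique _ _ hlb).
  apply: ex_series_scal_r; by exists la.
split; last exact: gsumC_abs (keyok1 _) hr hS.
apply: (gsumC_series _ _ (fun i => (A i * b)%C)) => //.
- exact: keyok1.
- move=> i; exact: (is_series_scal (A i) B b).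
- apply: (is_series_ext (fun i => scal b (A i))).
    by move=> i; rewrite /scal /= /mult /= Cmult_comm.
  rewrite (_ : (a * b)%C = scal b a); first exact: is_series_scal.
  by rewrite /scal /= /mult /= Cmult_comm.
Qed.

End S.


Section S.
Local Open Scope R_scope.

Definition Zf (w : C) (n : nat) : C := Cinv (npow n.+1 w).

Lemma Zf_eq w n : Zf w n = npow n.+1 (- w)%C.
Proof. by rewrite /Zf npow_inv. Qed.

Lemma Zf_mod w n : Cmod (Zf w n) = exp (- Re w * ln (INR n.+1)).
Proof. by rewrite Zf_eq Cmod_npow. Qed.

Lemma Zf_ex w : 1 < Re w -> ex_series (fun n => Cmod (Zf w n)).
Proof.
move=> hw; apply: (ex_series_ext (fun n => exp (- Re w * ln (INR n.+1)))).
  by move=> n; rewrite Zf_mod.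
exact: pseries.
Qed.

Lemma Zf_mul w i j n : key1 i j = n -> (Zf w i * Zf w j)%C = Zf w n.
Proof.
move=> h; have e : (n.+1 = i.+1 * j.+1)%nat by rewrite -h /key1 prednK // muln_gt0.
by rewrite !Zf_eq e npow_mul.
Qed.

Definition eF (w : C) (i k : nat) : C :=
  if prime i.+1 then (RtoC (/ INR i.+1) * pow_n (npow i.+1 (- w)%C) k.+1)%C else 0%C.

Lemma is_series_0C : is_series (fun _ : nat => RtoC 0) (RtoC 0).
Proof.
apply/filterlim_locally_ball_norm => eps; exists 0%nat => n _.
rewrite /ball_norm (sum_n_zero (fun _ => RtoC 0)) //.
rewrite minus_eq_zero norm_zero; exact: cond_pos.
Qed.

Lemma geomR (y c : R) : 0 <= y < 1 ->
  is_series (fun k => c * y ^ k.+1) (c * (y / (1 - y))).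
Proof.
move=> hy.
have hg := is_series_geom y ltac:(rewrite Rabs_pos_eq; lra).
have := is_series_scal_l (c * y) _ _ hg.
rewrite /scal /= /mult /= => h.
apply: (is_series_ext _ _ _ _ ); last first.
  rewrite (_ : c * (y / (1 - y)) = c * y * / (1 - y)); first exact: h.
  rewrite /Rdiv; ring.
move=> k /=; ring.
Qed.

Lemma ymod w p : 1 < Re w -> (1 < p)%nat ->
  Cmod (npow p (- w)%C) = exp (- Re w * ln (INR p)) /\
  0 <= exp (- Re w * ln (INR p)) <= / INR p /\ / INR p <= 1 / 2.
Proof.
move=> hw hp.
have hP : 2 <= INR p by rewrite (_ : 2 = INR 2) //; apply: le_INR; apply/leP.
have hl : 0 < ln (INR p) by rewrite -ln_1; apply: ln_increasing; lra.
split; first by rewrite Cmod_npow.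
split; last by rewrite /Rdiv Rmult_1_l; apply: Rinv_le_contravar; lra.
split; first by apply: Rlt_le; apply: exp_pos.
rewrite -[/ INR p]exp_ln; last by apply: Rinv_0_lt_compat; lra.
rewrite ln_Rinv; last lra.
apply: Rlt_le; apply: exp_increasing; nra.
Qed.

Lemma eF_row w i : 1 < Re w -> is_series (eF w i) (F_term w i.+1).
Proof.
move=> hw; rewrite /eF /F_term.
case hp: (prime i.+1); last first.
  exact: is_series_0C.
have h1 : (1 < i.+1)%nat by apply: prime_gt1.
have [hm [[_ hy] hh]] := ymod w i.+1 hw h1.
set x := npow i.+1 (- w)%C.
have hx : Cmod x < 1 by rewrite /x hm; lra.
have := is_series_scal (RtoC (/ INR i.+1)) _ _ (geomC x hx).
rewrite /scal /= /mult /= => h.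
suff -> : Cinv (Cminus (npow i.+1 (Cplus w (RtoC 1))) (RtoC (INR i.+1))) = (RtoC (/ INR i.+1) * (x / (1 - x)))%C by exact: h.
have hP : npow i.+1 w <> 0%C by apply: npow_ne0.
have hxe : x = Cinv (npow i.+1 w) by rewrite /x npow_inv.
have hP1 : (npow i.+1 w - 1)%C <> 0%C.
  move=> e; have e1 : npow i.+1 w = 1%C by apply/Ceq_minus.
  rewrite hxe e1 in hx; rewrite (_ : Cinv 1 = 1%C) ?Cmod_1 in hx; [lra|field].
have hpR : INR i.+1 <> 0 by apply: not_0_INR.
have hpC : RtoC (INR i.+1) <> 0%C by move=> e; apply: hpR; apply: RtoC_inj.
rewrite npow_add npow_1 // RtoC_inv // hxe.
field; repeat split => //.
rewrite (_ : (npow i.+1 w * INR i.+1 - INR i.+1)%C = ((npow i.+1 w - 1) * INR i.+1)%C); last ring.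
exact: Cmult_neq_0.
Qed.

Definition yv (w : C) (p : nat) : R := exp (- Re w * ln (INR p)).

Lemma eF_mod w i k : Cmod (eF w i k) = if prime i.+1 then / INR i.+1 * yv w i.+1 ^ k.+1 else 0.
Proof.
rewrite /eF; case: ifP => _; last by rewrite Cmod_0.
rewrite Cmod_mult Cmod_R Cmod_pow_n Cmod_npow Rabs_pos_eq //.
apply: Rlt_le; apply: Rinv_0_lt_compat; apply: lt_0_INR; lia.
Qed.

Lemma is_series_0R : is_series (fun _ : nat => 0) 0.
Proof.
apply: lim_series; apply: (is_lim_seq_ext (fun _ => 0)); last exact: is_lim_seq_const.
move=> n; by rewrite sum_n_zero.
Qed.

Lemma eF_abs_row w i : 1 < Re w ->
  is_series (fun k => Cmod (eF w i k))
    (if prime i.+1 then / INR i.+1 * (yv w i.+1 / (1 - yv w i.+1)) else 0).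
Proof.
move=> hw; case hp: (prime i.+1).
  have h1 : (1 < i.+1)%nat by apply: prime_gt1.
  have [_ [hy hh]] := ymod w i.+1 hw h1.
  apply: (is_series_ext (fun k => / INR i.+1 * yv w i.+1 ^ k.+1)).
    by move=> k; rewrite eF_mod hp.
  apply: geomR; rewrite /yv; lra.
apply: (is_series_ext (fun _ => 0)); last exact: is_series_0R.
by move=> k; rewrite eF_mod hp.
Qed.

Lemma eF_Ha w i : 1 < Re w -> ex_series (fun k => Cmod (eF w i k)).
Proof. move=> hw; eexists; exact: eF_abs_row. Qed.

Lemma eF_Hb w : 1 < Re w -> ex_series (fun i => Series (fun k => Cmod (eF w i k))).
Proof.
move=> hw.
apply: (ex_series_le _ (fun i => 2 * exp (- Re w * ln (INR i.+1)))); last first.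
  apply: (ex_series_ext (fun i => scal 2 (exp (- Re w * ln (INR i.+1))))) => //.
  apply: ex_series_scal_l; exact: pseries.
move=> i; rewrite (is_series_unique _ _ (eF_abs_row w i hw)).
change (Rabs (if prime i.+1 then / INR i.+1 * (yv w i.+1 / (1 - yv w i.+1)) else 0) <= 2 * exp (- Re w * ln (INR i.+1))).
have he := exp_pos (- Re w * ln (INR i.+1)).
case hp: (prime i.+1); last by rewrite Rabs_R0; lra.
have h1 : (1 < i.+1)%nat by apply: prime_gt1.
have [_ [hy hh]] := ymod w i.+1 hw h1.
rewrite /yv in hy *.
set y := exp (- Re w * ln (INR i.+1)) in hy he *.
have hp0 : 0 < / INR i.+1 by apply: Rinv_0_lt_compat; apply: lt_0_INR; lia.
have hq : 0 <= y / (1 - y) <= 2 * y.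
  split; first by apply: Rdiv_le_0_compat; lra.
  apply: (Rmult_le_reg_r (1 - y)); first lra.
  rewrite /Rdiv Rmult_assoc Rinv_l; nra.
rewrite Rabs_pos_eq; last nra.
nra.
Qed.

Lemma keyokF w : keyok (eF w) key2.
Proof. apply: keyok2 => i k hp; by rewrite /eF (negbTE hp). Qed.

Lemma H_eq w n : gsum (eF w) key2 n = (RtoC (lam n) * Zf w n)%C.
Proof.
apply: gsum_factor => i k h.
rewrite /eF /cpr; case: ifP => hp; last by rewrite Cmult_0_l.
have e : (n.+1 = i.+1 ^ k.+1)%nat by rewrite -h /key2 prednK // expn_gt0.
by rewrite Zf_eq e npow_pow.
Qed.

Lemma F_exists w : 1 < Re w -> exists Fv, is_F w Fv /\ is_series (fun i => F_term w i.+1) Fv.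
Proof.
move=> hw.
have [Fv hF] : ex_series (fun i => F_term w i.+1).
  apply: (rows_ex (eF w)); [move=> i; exact: eF_row | move=> i; exact: eF_Ha | exact: eF_Hb].
exists Fv; split => //.
apply: is_series_decr_1.
suff -> : plus Fv (opp (F_term w 0)) = Fv by [].
rewrite /F_term /= (_ : RtoC 0 = zero) // opp_zero plus_zero_r //.
Qed.

End S.


Section S.
Local Open Scope R_scope.

Lemma aux_field (a N P : C) : N <> 0%C -> P <> 0%C ->
  (RtoC 2 * (a * / P))%C = (N * (RtoC 2 * a) / (P * N))%C.
Proof. move=> h1 h2; field; split => //. Qed.

Lemma main_aux (s : C) (hs : 2 < Re s) :
  exists Z Fv : C,
    is_zeta (Cminus s (RtoC 1)) Z /\
    is_F (Cminus s (RtoC 1)) Fv /\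
    is_series
      (fun n : nat =>
         Cdiv (RtoC (INR (tau n.+1) * adelta n.+1)) (npow n.+1 s))
      (Cmult (RtoC 2) (Cmult (Cmult Z Z) Fv)).
Proof.
set w := Cminus s (RtoC 1).
have hw : 1 < Re w.
  rewrite /w; destruct s as [a b]; rewrite /Cminus /Cplus /Copp /=; simpl in hs; lra.
have [Z hZ] : ex_series (Zf w).
  apply: (ex_series_le _ (fun n => Cmod (Zf w n))); last exact: Zf_ex.
  move=> n; exact: Rle_refl.
have [Fv [hFv hF]] := F_exists w hw.
exists Z, Fv; split; first exact: hZ.
split; first exact: hFv.
have hH : is_series (gsum (eF w) key2) Fv.
  apply: (gsumC_series _ _ (fun i => F_term w i.+1)) => //.
  - exact: keyokF.
  - move=> i; exact: eF_Ha.
  - exact: eF_Hb.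
  - move=> i; exact: eF_row.
have hHa : ex_series (fun n => Cmod (gsum (eF w) key2 n)).
  apply: gsumC_abs; [exact: keyokF | move=> i; exact: eF_Ha | exact: eF_Hb].
set Hs := fun n => (RtoC (lam n) * Zf w n)%C.
have hH' : is_series Hs Fv by apply: (is_series_ext _ _ _ _ hH) => n; rewrite H_eq.
have hHa' : ex_series (fun n => Cmod (Hs n)) by apply: (ex_series_ext _ _ _ hHa) => n; rewrite H_eq.
have [hP hPa] := prodC Hs (Zf w) Fv Z hH' hZ hHa' (Zf_ex w hw).
set Lf := fun n => (RtoC (Lr n.+1) * Zf w n)%C.
have eP : forall n, gsum (fun i j => (Hs i * Zf w j)%C) key1 n = Lf n.
  move=> n; rewrite /Lf -NT4; apply: gsum_factor => i j h.
  by rewrite /Hs -Cmult_assoc (Zf_mul w i j n h).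
have hL : is_series Lf (Fv * Z)%C by apply: (is_series_ext _ _ _ _ hP) => n; rewrite eP.
have hLa : ex_series (fun n => Cmod (Lf n)) by apply: (ex_series_ext _ _ _ hPa) => n; rewrite eP.
have [hQ _] := prodC Lf (Zf w) (Fv * Z)%C Z hL hZ hLa (Zf_ex w hw).
have eQ : forall n, gsum (fun i j => (Lf i * Zf w j)%C) key1 n =
    (RtoC (gsum (fun i j => Lr i.+1) key1 n) * Zf w n)%C.
  move=> n; apply: gsum_factor => i j h.
  by rewrite /Lf -Cmult_assoc (Zf_mul w i j n h).
have := is_series_scal (RtoC 2) _ _ hQ.
rewrite /scal /= /mult /= => hfin.
rewrite (_ : (RtoC 2 * (Z * Z * Fv))%C = (RtoC 2 * (Fv * Z * Z))%C); last ring.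
apply: (is_series_ext _ _ _ _ hfin) => n.
rewrite eQ.
have es : s = (w + RtoC 1)%C by rewrite /w; ring.
have hN : INR n.+1 <> 0 by apply: not_0_INR.
have hNC : RtoC (INR n.+1) <> 0%C by move=> e; apply: hN; apply: RtoC_inj.
have hnp := npow_ne0 n.+1 w.
have -> : npow n.+1 s = (npow n.+1 w * RtoC (INR n.+1))%C by rewrite {1}es npow_add npow_1.
rewrite (_ : adelta n.+1 = INR n.+1 * Lr n.+1) //.
rewrite (_ : INR (tau n.+1) * (INR n.+1 * Lr n.+1) = INR n.+1 * (INR (tau n.+1) * Lr n.+1)); last ring.
rewrite NTB /Zf !RtoC_mult.
exact: aux_field.
Qed.

End S.


Theorem mainTheorem18 (s : C) (hs : 2 < Re s) :
  exists Z Fv : C,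
    is_zeta (Cminus s (RtoC 1)) Z /\
    is_F (Cminus s (RtoC 1)) Fv /\
    is_series
      (fun n : nat =>
         Cdiv (RtoC (INR (tau n.+1) * adelta n.+1)) (npow n.+1 s))
      (Cmult (RtoC 2) (Cmult (Cmult Z Z) Fv)).
Proof. exact: main_aux. Qed.
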